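(* Let $\mathcal{M}\subseteq\mathbb{S}^n$. Then $\mathcal{S}(\mathcal{M})$ is rank-one generated if and only if for every nonzero $X\in\mathcal{S}(\mathcal{M})$ we have $\mathrm{range}(X)\cap\mathcal{E}(X,\mathcal{M})\neq\{0\}$.
   Context: $\mathbb{S}^n$ denotes real symmetric $n\times n$ matrices with $\langle A,B\rangle=\mathrm{tr}(AB)$, $\mathbb{S}^n_+$ the PSD cone. For $\mathcal{M}\subseteq\mathbb{S}^n$, $\mathcal{S}(\mathcal{M})=\{X\in\mathbb{S}^n_+:\langle M,X\rangle\ge0\ \forall M\in\mathcal{M}\}$, and for $X\in\mathcal{S}(\mathcal{M})$, $\mathcal{E}(X,\mathcal{M})=\{x\in\mathbb{R}^n: |x^\top Mx|\le\langle M,X\rangle\ \forall M\in\mathcal{M}\}$. A closed convex cone $\mathcal{S}\subseteq\mathbb{S}^n_+$ is rank-one generated (ROG) if $\mathcal{S}=\mathrm{conv}(\mathcal{S}\cap\{xx^\top:x\in\mathbb{R}^n\})$. *)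

(* Defs.v *)
From HB Require Import structures.
From mathcomp Require Import all_boot all_order all_algebra.
From mathcomp Require Import reals.
Set Implicit Arguments. Unset Strict Implicit. Unset Printing Implicit Defensive.
Import Order.TTheory GRing.Theory Num.Theory.
Local Open Scope ring_scope.

Section Defs.
Variables (R : realType) (n : nat).

Definition sym_mx (A : 'M[R]_n) : Prop := A^T = A.

Definition qform (A : 'M[R]_n) (x : 'cV[R]_n) : R := (x^T *m A *m x) ord0 ord0.

Definition inner (A B : 'M[R]_n) : R := \tr (A *m B).

Definition psd (X : 'M[R]_n) : Prop := sym_mx X /\ forall x, 0 <= qform X x.

Definition SM (Ms : 'M[R]_n -> Prop) (X : 'M[R]_n) : Prop :=
  psd X /\ forall M, Ms M -> 0 <= inner M X.

Definition EM (X : 'M[R]_n) (Ms : 'M[R]_n -> Prop) (x : 'cV[R]_n) : Prop :=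
  forall M, Ms M -> `|qform M x| <= inner M X.

Definition in_range (X : 'M[R]_n) (x : 'cV[R]_n) : Prop :=
  exists y : 'cV[R]_n, x = X *m y.

Definition rank_one (Y : 'M[R]_n) : Prop := exists x : 'cV[R]_n, Y = x *m x^T.

Definition conv (A : 'M[R]_n -> Prop) (X : 'M[R]_n) : Prop :=
  exists (k : nat) (lam : 'I_k -> R) (Y : 'I_k -> 'M[R]_n),
    (forall i, 0 <= lam i) /\ \sum_(i < k) lam i = 1 /\
    (forall i, A (Y i)) /\ X = \sum_(i < k) lam i *: Y i.

Definition ROG (S : 'M[R]_n -> Prop) : Prop :=
  forall X, S X <-> conv (fun Y => S Y /\ rank_one Y) X.

End Defs.

(* Main.v *)
Require Import Defs.
From HB Require Import structures.
From mathcomp Require Import all_boot all_order all_algebra.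
From mathcomp Require Import reals.
From mathcomp Require Import boolp classical_sets.
From mathcomp Require Import ring lra.
Require Import Defs.
Import Order.TTheory GRing.Theory Num.Theory.
Set Implicit Arguments. Unset Strict Implicit. Unset Printing Implicit Defensive.
Local Open Scope ring_scope.



Section Basics.
Variables (R : realType) (n : nat).
Implicit Types (A B M X Y : 'M[R]_n) (x y u v : 'cV[R]_n).

Definition bil A u v : R := (u^T *m A *m v) ord0 ord0.
Definition dot u v : R := (u^T *m v) ord0 ord0.

Lemma qformD A B x : qform (A + B) x = qform A x + qform B x.
Proof. by rewrite /qform mulmxDr mulmxDl mxE. Qed.
Lemma qformZ c A x : qform (c *: A) x = c * qform A x.
Proof. by rewrite /qform -scalemxAr -scalemxAl mxE. Qed.
Lemma qform0 x : qform 0 x = 0.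
Proof. by rewrite /qform mulmx0 mul0mx mxE. Qed.
Lemma qform_sum (I : Type) (r : seq I) (P : pred I) (F : I -> 'M[R]_n) x :
  qform (\sum_(i <- r | P i) F i) x = \sum_(i <- r | P i) qform (F i) x.
Proof. by apply: (big_morph (fun A => qform A x)); [move=> ? ?; exact: qformD|exact: qform0]. Qed.

Lemma innerD M A B : inner M (A + B) = inner M A + inner M B.
Proof. by rewrite /inner mulmxDr mxtraceD. Qed.
Lemma innerZ M c A : inner M (c *: A) = c * inner M A.
Proof. by rewrite /inner -scalemxAr mxtraceZ. Qed.
Lemma inner0 M : inner M 0 = 0.
Proof. by rewrite /inner mulmx0 mxtrace0. Qed.
Lemma inner_sum M (I : Type) (r : seq I) (P : pred I) (F : I -> 'M[R]_n) :
  inner M (\sum_(i <- r | P i) F i) = \sum_(i <- r | P i) inner M (F i).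
Proof. by apply: (big_morph (inner M)); [exact: innerD|exact: inner0]. Qed.

Lemma inner_rank1 M x : inner M (x *m x^T) = qform M x.
Proof.
rewrite /inner /qform mulmxA mxtrace_mulC mulmxA.
by rewrite /mxtrace big_ord1.
Qed.

Lemma entry11 (a b : 'M[R]_1) : (a *m b) ord0 ord0 = a ord0 ord0 * b ord0 ord0.
Proof. by rewrite mxE big_ord1. Qed.

Lemma tr11 (a : 'M[R]_1) : a^T ord0 ord0 = a ord0 ord0.
Proof. by rewrite mxE. Qed.

Lemma dotC u v : dot u v = dot v u.
Proof. by rewrite /dot -tr11 trmx_mul trmxK. Qed.

Lemma qform_rank1 x v : qform (x *m x^T) v = dot x v ^+ 2.
Proof.
rewrite /qform mulmxA -mulmxA entry11 -/(dot v x) -/(dot x v).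
by rewrite (dotC v x) expr2.
Qed.

Lemma bil_sym A u v : sym_mx A -> bil A u v = bil A v u.
Proof.
move=> sA; rewrite /bil -tr11 !trmx_mul trmxK sA mulmxA; done.
Qed.

Lemma bilDr A u v w : bil A u (v + w) = bil A u v + bil A u w.
Proof. by rewrite /bil mulmxDr mxE. Qed.
Lemma bilZr A u v c : bil A u (c *: v) = c * bil A u v.
Proof. by rewrite /bil -scalemxAr mxE. Qed.
Lemma bilDl A u v w : bil A (u + w) v = bil A u v + bil A w v.
Proof. by rewrite /bil linearD /= !mulmxDl mxE. Qed.
Lemma bilZl A u v c : bil A (c *: u) v = c * bil A u v.
Proof. by rewrite /bil linearZ /= -!scalemxAl mxE. Qed.

Lemma qform_bil A x : qform A x = bil A x x.
Proof. by []. Qed.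

Lemma qform_comb A u v t : sym_mx A ->
  qform A (u + t *: v) = qform A u + 2 * t * bil A u v + t ^+ 2 * qform A v.
Proof.
move=> sA; rewrite !qform_bil bilDl !bilDr !bilZl !bilZr (bil_sym v u) //.
ring.
Qed.

Lemma cauchy_schwarz A u v : psd A -> bil A u v ^+ 2 <= qform A u * qform A v.
Proof.
case=> sA pA.
set a := qform A u; set b := bil A u v; set c := qform A v.
have H t : 0 <= a + 2 * t * b + t ^+ 2 * c by rewrite -qform_comb //; exact: pA.
have c0 : 0 <= c by exact: pA.
have a0 : 0 <= a by exact: pA.
case: (ltrgt0P c) => [cpos| cneg |c0'].
- have := H (- b / c).
  have -> : a + 2 * (- b / c) * b + (- b / c) ^+ 2 * c = a - b ^+ 2 / c.
    by field; rewrite gt_eqF.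
  rewrite subr_ge0 ler_pdivrMr // => h; by rewrite mulrC.
- by move: c0; rewrite leNgt cneg.
- rewrite c0' mulr0.
  case: (eqVneq b 0) => [->|bn0]; first by rewrite expr0n.
  have := H (- (a + 1) / (2 * b)).
  rewrite c0' mulr0 addr0.
  have -> : a + 2 * (- (a + 1) / (2 * b)) * b = -1.
    by field.
  by move=> h; exfalso; lra.
Qed.

End Basics.



Section Closure.
Variables (R : realType) (n : nat) (Ms : 'M[R]_n -> Prop).
Implicit Types (A B M X Y Z W D E : 'M[R]_n) (x y u v : 'cV[R]_n).

Lemma psd0 : psd (0 : 'M[R]_n).
Proof. by split; [rewrite /sym_mx trmx0|move=> x; rewrite qform0]. Qed.
Lemma psdD A B : psd A -> psd B -> psd (A + B).
Proof.
case=> sA pA [sB pB]; split; first by rewrite /sym_mx linearD /= sA sB.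
by move=> x; rewrite qformD addr_ge0.
Qed.
Lemma psdZ c A : 0 <= c -> psd A -> psd (c *: A).
Proof.
move=> c0 [sA pA]; split; first by rewrite /sym_mx linearZ /= sA.
by move=> x; rewrite qformZ mulr_ge0.
Qed.

Lemma SM0 : SM Ms 0.
Proof. by split; [exact: psd0|move=> M _; rewrite inner0]. Qed.
Lemma SMD A B : SM Ms A -> SM Ms B -> SM Ms (A + B).
Proof.
case=> pA iA [pB iB]; split; first exact: psdD.
by move=> M HM; rewrite innerD addr_ge0 //; [exact: iA|exact: iB].
Qed.
Lemma SMZ c A : 0 <= c -> SM Ms A -> SM Ms (c *: A).
Proof.
move=> c0 [pA iA]; split; first exact: psdZ.
by move=> M HM; rewrite innerZ mulr_ge0 //; exact: iA.
Qed.
Lemma SM_sum (k : nat) (F : 'I_k -> 'M[R]_n) :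
  (forall i, SM Ms (F i)) -> SM Ms (\sum_i F i).
Proof. move=> H; apply: (big_ind (SM Ms)); [exact: SM0|exact: SMD|done]. Qed.

Definition fdir Y E := exists2 e : R, 0 < e & forall t, `|t| <= e -> SM Ms (Y + t *: E).

Lemma fdir0 Y : SM Ms Y -> fdir Y 0.
Proof. by move=> SY; exists 1 => // t _; rewrite scaler0 addr0. Qed.

Lemma fdirZ Y E c : fdir Y E -> fdir Y (c *: E).
Proof.
case=> e e0 H; exists (e / (`|c| + 1)).
  by rewrite divr_gt0 // ltr_pwDr.
move=> t ht; rewrite scalerA; apply: H.
rewrite normrM.
have h1 : `|t| * (`|c| + 1) <= e.
  by rewrite -ler_pdivlMr // ltr_pwDr.
have := normr_ge0 t; nra.
Qed.

Lemma half_comb Y A B : SM Ms A -> SM Ms B ->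
  SM Ms (Y + 2^-1 *: (A - Y) + 2^-1 *: (B - Y)).
Proof.
move=> SA SB.
have -> : Y + 2^-1 *: (A - Y) + 2^-1 *: (B - Y) = 2^-1 *: A + 2^-1 *: B.
  by apply/matrixP => i j; rewrite !mxE; field.
by apply: SMD; apply: SMZ => //; rewrite invr_ge0.
Qed.

Lemma fdirD Y E1 E2 : fdir Y E1 -> fdir Y E2 -> fdir Y (E1 + E2).
Proof.
case=> e1 e10 H1 [e2 e20 H2]; exists (Num.min e1 e2 / 2).
  by rewrite divr_gt0 // lt_min e10 e20.
move=> t ht.
have ht2 : `|2 * t| <= Num.min e1 e2.
  by rewrite normrM ger0_norm // -ler_pdivlMl // mulrC.
have m1 : Num.min e1 e2 <= e1 by rewrite ge_min lexx.
have m2 : Num.min e1 e2 <= e2 by rewrite ge_min lexx orbT.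
have A1 := H1 (2 * t) (le_trans ht2 m1).
have A2 := H2 (2 * t) (le_trans ht2 m2).
have := @half_comb Y _ _ A1 A2.
suff -> : Y + 2^-1 *: (Y + (2 * t) *: E1 - Y) + 2^-1 *: (Y + (2 * t) *: E2 - Y)
   = Y + t *: (E1 + E2) by [].
by apply/matrixP => i j; rewrite !mxE; field.
Qed.

Lemma fdir_sum Y (k : nat) (F : 'I_k -> 'M[R]_n) :
  SM Ms Y -> (forall i, fdir Y (F i)) -> fdir Y (\sum_i F i).
Proof.
move=> SY H; apply: (big_ind (fdir Y)); [exact: fdir0|exact: fdirD|done].
Qed.

Lemma fdir_mono X Y W a E : SM Ms W -> 0 < a -> X = a *: Y + W ->
  fdir Y E -> fdir X E.
Proof.
move=> SW a0 -> [e e0 H]; exists (a * e); first exact: mulr_gt0.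
move=> t ht.
have -> : a *: Y + W + t *: E = a *: (Y + (t / a) *: E) + W.
  by apply/matrixP => i j; rewrite !mxE; field; rewrite gt_eqF.
apply: SMD => //; apply: SMZ; first exact: ltW.
apply: H; rewrite normrM normfV (gtr0_norm a0) ler_pdivrMr // mulrC //.
Qed.

Definition Cone X := exists (k : nat) (v : 'I_k -> 'cV[R]_n),
  (forall i, SM Ms (v i *m (v i)^T)) /\ X = \sum_i v i *m (v i)^T.

Lemma Cone0 : Cone 0.
Proof. by exists 0%N, (fun _ => 0); split => [[]//|]; rewrite big_ord0. Qed.

Lemma Cone_rank1 x : SM Ms (x *m x^T) -> Cone (x *m x^T).
Proof.
by move=> H; exists 1%N, (fun _ => x); split => //; rewrite big_ord1.
Qed.

Lemma Cone_add X Y : Cone X -> Cone Y -> Cone (X + Y).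
Proof.
case=> k1 [v1 [H1 ->]] [k2 [v2 [H2 ->]]].
exists (k1 + k2)%N, (fun i => match split i with inl a => v1 a | inr b => v2 b end).
split.
  by move=> i; case: (split i).
rewrite big_split_ord /=; congr (_ + _); apply: eq_bigr => i _.
  by rewrite (unsplitK (inl i)).
by rewrite (unsplitK (inr i)).
Qed.

Lemma rank1Z c x : (c *: x) *m (c *: x)^T = (c ^+ 2) *: (x *m x^T).
Proof. by rewrite linearZ /= -scalemxAl -scalemxAr scalerA expr2. Qed.

Lemma Cone_scale c X : 0 <= c -> Cone X -> Cone (c *: X).
Proof.
move=> c0 [k [v [H ->]]]; exists k, (fun i => Num.sqrt c *: v i); split.
  by move=> i; rewrite rank1Z sqr_sqrtr //; apply: SMZ.
rewrite scaler_sumr; apply: eq_bigr => i _; by rewrite rank1Z sqr_sqrtr.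
Qed.

Definition good (k : nat) X := exists A : 'M[R]_(k, n * n),
  row_free A /\ forall i, fdir X (vec_mx (row i A)).

Lemma good0 Y : good 0 Y.
Proof.
exists 0; split; last by case.
by rewrite /row_free mxrank0.
Qed.

Lemma good_le k X : good k X -> (k <= n * n)%N.
Proof. by case=> A [/eqP h _]; rewrite -h; exact: rank_leq_col. Qed.

Lemma good_ext X Y D k : SM Ms Y -> (forall E, fdir Y E -> fdir X E) ->
  fdir X D -> ~ fdir Y D -> good k Y -> good k.+1 X.
Proof.
move=> SY sub fXD nfYD [A [rfA rA]].
have nsub : ~~ (mxvec D <= A)%MS.
  apply/negP => /submxP [u Hu]; apply: nfYD.
  rewrite -(mxvecK D) Hu mulmx_sum_row linear_sum /=.
  apply: fdir_sum => // i; rewrite linearZ /=; exact: fdirZ.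
have Dn0 : mxvec D != 0.
  apply: contra nsub => /eqP ->; exact: sub0mx.
exists (col_mx (mxvec D) A); split.
  rewrite /row_free -(eqmx_rank (introT eqmxP (addsmxE (mxvec D) A))).
  have cap0 : \rank (mxvec D :&: A)%MS = 0%N.
    have le1 : (\rank (mxvec D :&: A)%MS <= \rank (mxvec D))%N.
      by apply: mxrankS; exact: capmxSl.
    move: le1; rewrite rank_rV Dn0 /= => le1.
    apply/eqP; apply: contraNT nsub => h.
    have e1 : \rank (mxvec D :&: A)%MS = 1%N.
      by apply/eqP; rewrite eqn_leq le1 lt0n.
    have sc : (mxvec D :&: A <= mxvec D)%MS by exact: capmxSl.
    have := mxrank_leqif_eq sc; rewrite e1 rank_rV Dn0 => /leqif_refl /andP [_ h2].
    by apply: submx_trans h2 _; exact: capmxSr.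
  have := mxrank_sum_cap (mxvec D) A.
  by rewrite cap0 addn0 rank_rV Dn0 (eqP rfA) => ->.
change (forall i : 'I_(1 + k), fdir X (vec_mx (row i (col_mx (mxvec D) A)))).
move=> i; rewrite -(splitK i); case: (split i) => j /=.
  by rewrite rowKu row_id mxvecK.
by rewrite rowKd; apply: sub.
Qed.

End Closure.



Section Sup.
Variable (R : realType).

Lemma sup_lin (T : set R) (a b : R) : T 0 -> (forall t, T t -> 0 <= t) ->
  (exists B, forall t, T t -> t <= B) ->
  (forall t, T t -> 0 <= a - t * b) -> 0 <= a - sup T * b.
Proof.
move=> T0 Tge [B HB] H.
have hs : has_sup T by split; [exists 0|exists B => t /HB].
have s0 : 0 <= sup T by exact: (sup_upper_bound hs).
have a0 : 0 <= a by have := H 0 T0; rewrite mul0r subr0.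
case: (lerP b 0) => hb.
  have : sup T * b <= 0 by rewrite mulr_ge0_le0.
  lra.
have : sup T <= a / b.
  apply: ge_sup; first by exists 0.
  move=> t Tt; rewrite ler_pdivlMr //; have := H t Tt; lra.
rewrite ler_pdivlMr //; lra.
Qed.

End Sup.

Section Seg.
Variables (R : realType) (n : nat) (Ms : 'M[R]_n -> Prop).
Implicit Types (M X Y Z W D E : 'M[R]_n) (x y u v : 'cV[R]_n).

Lemma seg_end X D : SM Ms X -> sym_mx D ->
  (exists B, forall t, 0 <= t -> SM Ms (X + t *: D) -> t <= B) ->
  exists s, 0 <= s /\ SM Ms (X + s *: D) /\
     (forall e, 0 < e -> ~ SM Ms (X + (s + e) *: D)).
Proof.
move=> SX sD [B HB].
pose T := fun t : R => 0 <= t /\ SM Ms (X + t *: D).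
have T0 : T 0 by split => //; rewrite scale0r addr0.
have Tge : forall t, T t -> 0 <= t by move=> t [].
have Tb : exists B, forall t, T t -> t <= B by exists B => t [h1 h2]; exact: HB.
have hs : has_sup T by split; [exists 0|case: Tb => b hb; exists b => t /hb].
have s0 : 0 <= sup T by exact: (sup_upper_bound hs).
exists (sup T); split => //; split.
  case: SX => [[sX pX] iX]; split; first split.
  - by rewrite /sym_mx linearD linearZ /= sX sD.
  - move=> v; rewrite qformD qformZ.
    have := @sup_lin R T (qform X v) (- qform D v) T0 Tge Tb.
    rewrite mulrN opprK; apply => t [_ [[_ h] _]].
    by have := h v; rewrite qformD qformZ mulrN opprK.
  - move=> M HM; rewrite innerD innerZ.
    have := @sup_lin R T (inner M X) (- inner M D) T0 Tge Tb.
    rewrite mulrN opprK; apply => t [_ [_ h]].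
    by have := h M HM; rewrite innerD innerZ mulrN opprK.
move=> e e0 S'.
have : T (sup T + e) by split => //; apply: addr_ge0 => //; exact: ltW.
move/(sup_upper_bound hs); lra.
Qed.

End Seg.



Section Decomp.
Variables (R : realType) (n : nat) (Ms : 'M[R]_n -> Prop).
Implicit Types (M X Y Z W D E : 'M[R]_n) (x y u v : 'cV[R]_n).

Lemma dot_sum x : dot x x = \sum_i x i ord0 ^+ 2.
Proof. by rewrite /dot mxE; apply: eq_bigr => i _; rewrite mxE expr2. Qed.

Lemma dot_pos x : x != 0 -> 0 < dot x x.
Proof.
move=> xn0; rewrite dot_sum.
have [i xi] : exists i, x i ord0 != 0.
  apply/existsP; apply: contraR xn0 => /existsPn H.
  apply/eqP/matrixP => i j; rewrite ord1 mxE; have := H i; by rewrite negbK => /eqP.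
rewrite (bigD1 i) //= ltr_pwDl //; first by rewrite lt_def sqrf_eq0 xi sqr_ge0.
by apply: sumr_ge0 => j _; exact: sqr_ge0.
Qed.


Lemma qformN A x : qform (- A) x = - qform A x.
Proof. by rewrite -scaleN1r qformZ mulN1r. Qed.

Lemma dot_range X y v : sym_mx X -> dot (X *m y) v = bil X y v.
Proof. by move=> sX; rewrite /dot /bil trmx_mul sX. Qed.

Lemma sym_rank1 x : sym_mx (x *m x^T).
Proof. by rewrite /sym_mx trmx_mul trmxK. Qed.

Lemma psd_rank1 x : psd (x *m x^T).
Proof. by split; [exact: sym_rank1|move=> v; rewrite qform_rank1 sqr_ge0]. Qed.

Lemma fdir_rank1 X y : SM Ms X -> EM X Ms (X *m y) ->
  fdir Ms X ((X *m y) *m (X *m y)^T).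
Proof.
move=> SX EX; case: (SX) => [[sX pX] iX].
have qy := pX y.
exists ((1 + qform X y)^-1); first by rewrite invr_gt0; lra.
move=> t ht.
have ht' : `|t| * (1 + qform X y) <= 1.
  by move: ht; rewrite -[(1 + qform X y)^-1]mul1r ler_pdivlMr //; lra.
have tn := normr_ge0 t.
have t1 : `|t| <= 1 by nra.
have h1 : - `|t| <= t by have := ler_norm (- t); rewrite normrN; lra.
split; first split.
- by rewrite /sym_mx linearD linearZ /= sX sym_rank1.
- move=> v; rewrite qformD qformZ qform_rank1 dot_range //.
  have cs := @cauchy_schwarz R n X y v (conj sX pX).
  have qv := pX v.
  have hb := sqr_ge0 (bil X y v).
  have h2 : `|t| * bil X y v ^+ 2 <= `|t| * (qform X y * qform X v) by exact: ler_wpM2l.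
  have h3 : `|t| * (qform X y * qform X v) <= qform X v.
    have : 0 <= (1 - `|t| * qform X y) * qform X v by apply: mulr_ge0 => //; nra.
    nra.
  have h4 : - `|t| * bil X y v ^+ 2 <= t * bil X y v ^+ 2 by apply: ler_wpM2r.
  nra.
- move=> M HM; rewrite innerD innerZ inner_rank1.
  have hq := EX M HM.
  have h5 : - (`|t| * `|qform M (X *m y)|) <= t * qform M (X *m y).
    by have := ler_norm (- (t * qform M (X *m y))); rewrite normrN normrM; lra.
  have h6 : `|t| * `|qform M (X *m y)| <= `|qform M (X *m y)|.
    by rewrite ler_piMl.
  lra.
Qed.

Lemma decomp X : SM Ms X -> X != 0 ->
  (exists x, x != 0 /\ in_range X x /\ EM X Ms x) ->
  exists Y, SM Ms Y /\ (forall k, good Ms k Y -> good Ms k.+1 X) /\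
   ((Cone Ms Y -> Cone Ms X) \/
    exists Z, SM Ms Z /\ (forall k, good Ms k Z -> good Ms k.+1 X) /\
      (Cone Ms Y -> Cone Ms Z -> Cone Ms X)).
Proof.
move=> SX Xn0 [x [xn0 [[y xE] EX]]].
have fD : fdir Ms X (x *m x^T).
  by rewrite xE; apply: (fdir_rank1 (y := y) SX); rewrite -xE.
set D := x *m x^T.
case: (fD) => e0 e00 He0.
have sD : sym_mx D := sym_rank1 x.
have dp := dot_pos xn0.
have [s1 [s10 [SY1 nY1]]] : exists s, 0 <= s /\ SM Ms (X + s *: - D) /\
    (forall e, 0 < e -> ~ SM Ms (X + (s + e) *: - D)).
  apply: seg_end => //; first by rewrite /sym_mx linearN /= sD.
  exists (qform X x / (dot x x) ^+ 2) => t t0 [[_ p] _].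
  have := p x; rewrite qformD qformZ qformN qform_rank1 => h.
  rewrite ler_pdivlMr ?exprn_gt0 //; nra.
have s1ge : e0 <= s1.
  rewrite leNgt; apply/negP => lt; apply: (nY1 (e0 - s1)); first by rewrite subr_gt0.
  have -> : X + (s1 + (e0 - s1)) *: - D = X + (- e0) *: D.
    by apply/matrixP => i j; rewrite !mxE; ring.
  by apply: He0; rewrite normrN gtr0_norm.
set Y := X + s1 *: - D.
have nfY : ~ fdir Ms Y D.
  case=> e e0' He; apply: (nY1 e e0').
  have := He (- e); rewrite normrN gtr0_norm // => /(_ (lexx _)).
  suff -> : Y + (- e) *: D = X + (s1 + e) *: - D by [].
  by apply/matrixP => i j; rewrite !mxE; ring.
case: (pselect (SM Ms D)) => [SD|nSD].
  have XE : X = 1 *: Y + s1 *: D by apply/matrixP => i j; rewrite !mxE; ring.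
  exists Y; split => //; split.
    move=> k; apply: (good_ext (D := D)) => // E; exact: (fdir_mono (SMZ s10 SD) ltr01 XE).
  left => CY; rewrite XE scale1r; apply: Cone_add CY _.
  exact: (Cone_scale s10 (Cone_rank1 SD)).
have [M0 [HM0 q0]] : exists M, Ms M /\ inner M D < 0.
  have : ~ (forall M, Ms M -> 0 <= inner M D).
    by move=> H; apply: nSD; split; [exact: psd_rank1|exact: H].
  move/existsNP => [M /not_implyP [HM /negP]]; rewrite -ltNge => h.
  by exists M.
have [s2 [s20 [SZ nZ]]] : exists s, 0 <= s /\ SM Ms (X + s *: D) /\
    (forall e, 0 < e -> ~ SM Ms (X + (s + e) *: D)).
  apply: seg_end => //.
  exists (inner M0 X / (- inner M0 D)) => t t0 [_ p].
  have := p M0 HM0; rewrite innerD innerZ => h.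
  rewrite ler_pdivlMr ?oppr_gt0 //; nra.
have s2ge : e0 <= s2.
  rewrite leNgt; apply/negP => lt; apply: (nZ (e0 - s2)); first by rewrite subr_gt0.
  have -> : X + (s2 + (e0 - s2)) *: D = X + e0 *: D.
    by apply/matrixP => i j; rewrite !mxE; ring.
  by apply: He0; rewrite gtr0_norm.
set Z := X + s2 *: D.
have nfZ : ~ fdir Ms Z D.
  case=> e e0' He; apply: (nZ e e0').
  have := He e; rewrite gtr0_norm // => /(_ (lexx _)).
  suff -> : Z + e *: D = X + (s2 + e) *: D by [].
  by apply/matrixP => i j; rewrite !mxE; ring.
have sp : 0 < s1 + s2 by lra.
have a0 : 0 < s2 / (s1 + s2) by rewrite divr_gt0 //; lra.
have b0 : 0 < s1 / (s1 + s2) by rewrite divr_gt0 //; lra.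
have XE : X = (s2 / (s1 + s2)) *: Y + (s1 / (s1 + s2)) *: Z.
  by apply/matrixP => i j; rewrite !mxE; field; rewrite gt_eqF.
exists Y; split => //; split.
  move=> k; apply: (good_ext (D := D)) => // E.
  exact: (fdir_mono (SMZ (ltW b0) SZ) a0 XE).
right; exists Z; split => //; split.
  move=> k; apply: (good_ext (D := D)) => // E.
  have XE' : X = (s1 / (s1 + s2)) *: Z + (s2 / (s1 + s2)) *: Y by rewrite addrC.
  exact: (fdir_mono (SMZ (ltW a0) SY1) b0 XE').
move=> CY CZ; rewrite XE; apply: Cone_add; exact: Cone_scale (ltW _) _.
Qed.

End Decomp.



Section Final.
Variables (R : realType) (n : nat) (Ms : 'M[R]_n -> Prop).
Implicit Types (M X Y Z W D E : 'M[R]_n) (x y u v : 'cV[R]_n).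

Lemma main_ind :
  (forall X, SM Ms X -> X != 0 -> exists x, x != 0 /\ in_range X x /\ EM X Ms x) ->
  forall m X, SM Ms X -> (forall k, good Ms k X -> (k <= m)%N) -> Cone Ms X.
Proof.
move=> cond m; elim: m => [|m IH] X SX bX;
  (case: (eqVneq X 0) => [->|Xn0]; first exact: Cone0);
  have [Y [SY [gY rest]]] := decomp SX Xn0 (cond X SX Xn0).
  by have := bX 1%N (gY 0%N (good0 Ms Y)).
have bY : forall k, good Ms k Y -> (k <= m)%N by move=> k /gY /bX.
have CY := IH Y SY bY.
case: rest => [h|[Z [SZ [gZ h]]]]; first exact: h.
apply: h => //; apply: (IH Z SZ) => k /gZ /bX; done.
Qed.

Lemma Cone_conv X : Cone Ms X -> conv (fun Y => SM Ms Y /\ rank_one Y) X.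
Proof.
case=> [[|k]] [v [Hv ->]].
  exists 1%N, (fun _ => 1), (fun _ => 0); split => //; split; first by rewrite big_ord1.
  split; first by move=> _; split; [exact: SM0|exists 0; rewrite mul0mx].
  by rewrite big_ord0 big_ord1 scaler0.
have kp : 0 < (k.+1)%:R :> R by rewrite ltr0n.
exists k.+1, (fun _ => (k.+1)%:R^-1), (fun i => (k.+1)%:R *: (v i *m (v i)^T)).
split; first by move=> i; rewrite invr_ge0 ltW.
split; first by rewrite sumr_const card_ord -[LHS]mulr_natr mulVf // gt_eqF.
split.
  move=> i; split; first by apply: SMZ => //; exact: ltW.
  by exists (Num.sqrt (k.+1)%:R *: v i); rewrite rank1Z sqr_sqrtr // ltW.
apply: eq_bigr => i _; by rewrite scalerA mulVf ?gt_eqF // scale1r.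
Qed.

Lemma conv_SM X : conv (fun Y => SM Ms Y /\ rank_one Y) X -> SM Ms X.
Proof.
case=> k [lam [Y [l0 [_ [HY ->]]]]].
apply: SM_sum => i; apply: SMZ; first exact: l0.
exact: (HY i).1.
Qed.

Lemma col_mulmx (p q : nat) (A : 'M[R]_(1, p)) (B : 'M[R]_(p, q)) j :
  (A *m B) ord0 j = (A *m col j B) ord0 ord0.
Proof.
rewrite !mxE; apply: eq_bigr => i _; by rewrite mxE.
Qed.

Lemma qform_scalev M c x : qform M (c *: x) = c ^+ 2 * qform M x.
Proof. by rewrite !qform_bil bilZl bilZr mulrA expr2. Qed.

Lemma forward X : SM Ms X -> X != 0 -> conv (fun Y => SM Ms Y /\ rank_one Y) X ->
  exists x, x != 0 /\ in_range X x /\ EM X Ms x.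
Proof.
move=> [[sX pX] iX] Xn0 [k [lam [Y [l0 [_ [HY XE]]]]]].
have /existsP [i hi] : [exists i, lam i *: Y i != 0].
  apply: contraR Xn0 => /existsPn H; apply/eqP; rewrite XE big1 // => i _.
  by apply/eqP; move: (H i); rewrite negbK.
move: hi; rewrite scaler_eq0 negb_or => /andP [li Yi].
have lp : 0 < lam i by rewrite lt_def li l0.
case: (HY i) => SYi [yi Yie].
have key : (yi)^T *m cokermx X = 0.
  apply/matrixP => a j; rewrite ord1 [RHS]mxE col_mulmx.
  set c := col j (cokermx X).
  have Xc : X *m c = 0 by rewrite /c colE mulmxA mulmx_coker mul0mx.
  have q0 : qform X c = 0 by rewrite /qform -mulmxA Xc mulmx0 mxE.
  move: q0; rewrite XE qform_sum => q0.
  have nn : forall j0 : 'I_k, xpredT j0 -> 0 <= qform (lam j0 *: Y j0) c.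
    by move=> j0 _; rewrite qformZ mulr_ge0 //; exact: (HY j0).1.1.2.
  have := @psumr_eq0P R _ xpredT (fun j => qform (lam j *: Y j) c) nn q0 i isT.
  rewrite qformZ Yie qform_rank1 => /eqP; rewrite mulf_eq0 (negbTE li) /= sqrf_eq0.
  by rewrite /dot => /eqP.
have rng : in_range X (yi).
  move: key => /eqP; rewrite -submxE => /submxP [u hu].
  by exists u^T; rewrite -[yi]trmxK hu trmx_mul sX.
have yn0 : yi != 0.
  by apply: contraNneq Yi => h; rewrite Yie h mul0mx.
exists (Num.sqrt (lam i) *: yi); split.
  by rewrite scaler_eq0 negb_or sqrtr_eq0 -ltNge lp.
split.
  by case: rng => u ->; exists (Num.sqrt (lam i) *: u); rewrite scalemxAr.
have l0i : 0 <= lam i := ltW lp.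
move=> M HM; rewrite qform_scalev sqr_sqrtr //.
have qy : 0 <= qform M (yi) by rewrite -inner_rank1 -Yie; exact: SYi.2.
rewrite ger0_norm ?mulr_ge0 // XE inner_sum (bigD1 i) //= innerZ Yie inner_rank1.
rewrite lerDl; apply: sumr_ge0 => j _; rewrite innerZ mulr_ge0 //.
exact: (HY j).1.2.
Qed.

End Final.

Theorem lemma2p23 (R : realType) (n : nat) (Ms : 'M[R]_n -> Prop)
  (HMs : forall M, Ms M -> sym_mx M) :
  ROG (SM Ms) <->
  (forall X : 'M[R]_n, SM Ms X -> X != 0 ->
     exists x : 'cV[R]_n, x != 0 /\ in_range X x /\ EM X Ms x).
Proof.
split.
- move=> rog X SX Xn0; apply: forward => //; exact: (rog X).1 SX.
- move=> cond X; split.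
  + move=> SX; apply: Cone_conv.
    apply: (@main_ind R n Ms cond (n * n)%N X SX) => k; exact: good_le.
  + exact: conv_SM.
Qed.
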